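(* Let $\alpha\in(0,1]$ and $\mathbf u=(u_1,\dots,u_m)\in[0,1]^m$ with $m\ge1$. Let $k_1,\dots,k_l\in\{1,\dots,m\}$ be distinct with $\sum_{i=1}^lu_{k_i}\le\alpha l$. Then $H_{\mathrm o}([\mathbf u])\preccurlyeq[(u_{k_1},\dots,u_{k_l})]$. Moreover, if $H_{\mathrm o}([\mathbf u])=\varnothing$, then every nonempty $S\subset\{1,\dots,m\}$ satisfies $\sum_{i\in S}u_i>\alpha|S|$.
   Context: $\mathcal S_{\mathrm o}=\bigcup_{m\ge1}\{(v_1,\dots,v_m)\in[0,1]^m:v_1\le\cdots\le v_m\}\cup\{\varnothing\}$, where $\varnothing$ is the vector of length $0$; $\dim(\mathbf u)$ is the length of $\mathbf u$. Partial order: for $\mathbf u,\mathbf v\in\mathcal S_{\mathrm o}$, $\mathbf u\preccurlyeq\mathbf v$ iff $\dim(\mathbf u)\ge\dim(\mathbf v)$ and $u_i\le v_i$ for $i=1,\dots,\dim(\mathbf v)$ (in particular $\mathbf u\preccurlyeq\varnothing$ for all $\mathbf u$). For a finite vector $\mathbf v$, $[\mathbf v]$ is its order statistic (components sorted increasingly), $[\varnothing]=\varnothing$; for $l=0$, $[(u_{k_1},\dots,u_{k_l})]=\varnothing$. For $\mathbf u=(u_1,\dots,u_d)\in\mathcal S_{\mathrm o}$ with $d\ge1$, $I_{\mathrm o}(\mathbf u)=\max\{n\in\{0,\dots,d\}:\sum_{i=1}^nu_i\le\alpha n\}$, and $I_{\mathrm o}(\varnothing)=0$; $H_{\mathrm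 o}(\mathbf u)=(u_1,\dots,u_{I_{\mathrm o}(\mathbf u)})$ if $I_{\mathrm o}(\mathbf u)\ge1$ and $H_{\mathrm o}(\mathbf u)=\varnothing$ otherwise. *)

(* Defs.v *)
(* the statement is purely order-theoretic, so we state it
   over an arbitrary real field R (covers the real numbers). *)
From HB Require Import structures.
From mathcomp Require Import all_boot all_order all_algebra.
Set Implicit Arguments. Unset Strict Implicit. Unset Printing Implicit Defensive.
Import Order.TTheory GRing.Theory Num.Theory.
Local Open Scope ring_scope.

(* Order statistic [v]: components sorted increasingly. *)
Definition ostat (R : realFieldType) (v : seq R) : seq R := sort <=%R v.

Definition preceq (R : realFieldType) (u v : seq R) : Prop :=
  (size v <= size u)%N /\ forall i, (i < size v)%N -> nth 0 u i <= nth 0 v i.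

Definition I_o (R : realFieldType) (alpha : R) (u : seq R) : nat :=
  \max_(n < (size u).+1 | (\sum_(i < n) nth 0 u i <= alpha * n%:R)%R) (n : nat).

Definition H_o (R : realFieldType) (alpha : R) (u : seq R) : seq R :=
  take (I_o alpha u) u.

(* Main.v *)
Require Import Defs.
From HB Require Import structures.
From mathcomp Require Import all_boot all_order all_algebra.
From mathcomp Require Import zify.
Import Order.TTheory GRing.Theory Num.Theory.
Local Open Scope ring_scope.

Lemma cnt_enum (T : finType) (p : pred T) : count p (enum T) = #|p|.
Proof. rewrite cardE /enum_mem size_filter (eq_filter (a2 := predT)) // filter_predT; apply: eq_count => x; exact: erefl. Qed.

Lemma cnt_enum2 (T : finType) (p : pred T) : count p (Finite.enum T) = #|p|.
Proof. rewrite cardE /enum_mem size_filter; apply: eq_count => x; exact: erefl. Qed.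

Lemma cntA (R : realFieldType) (st : seq R) i y :
  sorted <=%R st -> (i < size st)%N -> y < nth 0 st i ->
  (count (fun z : R => (z <= y)%R) st <= i)%N.
Proof.
move=> ss hi hy.
rewrite -(cat_take_drop i st) count_cat.
have -> : count (fun z : R => (z <= y)%R) (drop i st) = 0%N.
  rewrite (eq_in_count (a2 := pred0)) ?count_pred0 //.
  move=> z /(nthP 0) [j]; rewrite size_drop => hj <-.
  rewrite nth_drop /=; apply/negbTE; rewrite -ltNge.
  apply: (lt_le_trans hy).
  apply: (le_sorted_leq_nth 0 ss); rewrite ?inE ?leq_addr //. by rewrite -ltn_subRL.
rewrite addn0; apply: leq_trans (count_size _ _) _.
by rewrite size_take; case: ltnP.
Qed.

Lemma cntB (R : realFieldType) (st : seq R) i :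
  sorted <=%R st -> (i < size st)%N ->
  (i.+1 <= count (fun z : R => (z <= nth 0 st i)%R) st)%N.
Proof.
move=> ss hi.
rewrite -(cat_take_drop i.+1 st) count_cat.
apply: leq_trans (leq_addr _ _).
rewrite (eq_in_count (a2 := predT)) ?count_predT ?size_takel //.
move=> z /(nthP 0) [j]; rewrite size_takel // => hj <-.
rewrite nth_take //=.
rewrite cat_take_drop; apply: (le_sorted_leq_nth 0 ss); rewrite ?inE //. exact: leq_trans hj hi.
Qed.

Lemma nth_sub (R : realFieldType) (s t : seq R) i :
  (forall y, count (fun z : R => (z <= y)%R) s <= count (fun z : R => (z <= y)%R) t)%N ->
  (i < size s)%N -> (size s <= size t)%N ->
  nth 0 (sort <=%R t) i <= nth 0 (sort <=%R s) i.
Proof.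
move=> hc hi hst; rewrite leNgt; apply/negP => hlt.
have h1 := @cntA R _ i _ (sort_le_sorted t) _ hlt.
rewrite size_sort in h1.
have h2 := @cntB R _ i (sort_le_sorted s).
rewrite size_sort in h2.
have := hc (nth 0 (sort <=%R s) i).
rewrite -(count_sort <=%R _ s) -(count_sort <=%R _ t).
move=> hc'.
have := leq_ltn_trans (leq_trans hc' (h1 (leq_trans hi hst))) (h2 hi).
by rewrite ltnn.
Qed.
Theorem mainTheorem14 (R : realFieldType) (alpha : R) (m : nat)
    (u : 'I_m -> R) :
  0 < alpha -> alpha <= 1 -> (1 <= m)%N ->
  (forall j, 0 <= u j <= 1) ->
  (forall (l : nat) (k : 'I_l -> 'I_m), injective k ->
     \sum_(i < l) u (k i) <= alpha * l%:R ->
     preceq (H_o alpha (ostat [seq u j | j <- enum 'I_m]))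
            (ostat [seq u (k i) | i <- enum 'I_l]))
  /\
  (H_o alpha (ostat [seq u j | j <- enum 'I_m]) = [::] ->
     forall S : {set 'I_m}, S != set0 ->
       alpha * (#|S|)%:R < \sum_(j in S) u j).
Proof.
move=> a0 a1 m1 u01.
set t := [seq u j | j <- enum 'I_m].
set w := ostat t.
have sw : size w = m by rewrite /w /ostat size_sort size_map size_enum_ord.
have Iw : (I_o alpha w <= m)%N.
  rewrite /I_o; apply/bigmax_leqP => i _; rewrite -ltnS -sw; exact: ltn_ord.
have part1 : forall (l : nat) (k : 'I_l -> 'I_m), injective k ->
     \sum_(i < l) u (k i) <= alpha * l%:R ->
     preceq (H_o alpha w) (ostat [seq u (k i) | i <- enum 'I_l]).
  move=> l k kinj hs.
  have hl : (l <= m)%N by have := leq_card k kinj; rewrite !card_ord.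
  set s := [seq u (k i) | i <- enum 'I_l].
  have ss : size s = l by rewrite size_map size_enum_ord.
  have st : size t = m by rewrite size_map size_enum_ord.
  have hc : forall y, (count (fun z : R => (z <= y)%R) s <= count (fun z : R => (z <= y)%R) t)%N.
    move=> y; rewrite /s /t !count_map !cnt_enum2.
    rewrite -(card_imset _ kinj); apply: subset_leq_card.
    by apply/subsetP => j /imsetP [i hi ->]; rewrite !inE /= in hi *.
  have hnth : forall i, (i < l)%N -> nth 0 w i <= nth 0 (ostat s) i.
    move=> i hi; apply: nth_sub => //; by rewrite ?ss ?st.
  have hsum : \sum_(i < l) nth 0 w i <= alpha * l%:R.
    apply: le_trans hs.
    have -> : \sum_(i < l) u (k i) = \sum_(i < l) nth 0 (ostat s) i.
      have -> : \sum_(i < l) nth 0 (ostat s) i = \sum_(x <- ostat s) x.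
        by rewrite (big_nth 0) /ostat size_sort ss big_mkord.
      rewrite /ostat (perm_big _ (permEl (perm_sort _ _))) big_map.
      by rewrite big_enum.
    by apply: ler_sum => i _; apply: hnth.
  have hIl : (l <= I_o alpha w)%N.
    rewrite /I_o.
    have hl' : (l < (size w).+1)%N by rewrite sw ltnS.
    exact: (@leq_bigmax_cond _ _ (fun n : 'I_(size w).+1 => (n : nat)) (Ordinal hl')).
  split.
    by rewrite /H_o size_takel ?sw // /ostat size_sort ss.
  move=> i; rewrite /ostat size_sort ss => hi.
  rewrite /H_o nth_take; last exact: leq_trans hi hIl.
  exact: hnth.
split => //.
move=> H0 S SN.
rewrite ltNge; apply/negP => hS.
have := part1 _ _ (@enum_val_inj _ (mem S)).
rewrite -big_enum_val => /(_ hS) [].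
rewrite H0 /ostat size_sort size_map size_enum_ord leqn0 => /eqP.
by move/eqP; rewrite cards_eq0 (negbTE SN).
Qed.
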